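(* Let $R$ be a commutative ring, $s\in R$, and let $A\in M_2(R;s)$ with $A\notin J\big(M_2(R;s)\big)$. If $\det_s(A)\in J(R)$ and $tr(A)\in J(R)$, then $A$ is not strongly $J$-clean in $M_2(R;s)$.
   Context: $J(\cdot)$ denotes the Jacobson radical. For a commutative ring $R$ and $s\in R$, $M_2(R;s)$ denotes the ring whose elements are the $2\times 2$ arrays $\left[\begin{smallmatrix} a&b\\ c&d\end{smallmatrix}\right]$ with $a,b,c,d\in R$, with componentwise addition and multiplication $\left[\begin{smallmatrix} a&b\\ c&d\end{smallmatrix}\right]\left[\begin{smallmatrix} a'&b'\\ c'&d'\end{smallmatrix}\right]=\left[\begin{smallmatrix} aa'+s^2bc'&ab'+bd'\\ ca'+dc'&s^2cb'+dd'\end{smallmatrix}\right]$. For $A=\left[\begin{smallmatrix} a&b\\ c&d\end{smallmatrix}\right]$, $\det_s(A)=ad-s^2bc$ and $tr(A)=a+d$. An element $a$ of a ring $T$ is strongly $J$-clean if there is an idempotent $e\in T$ with $ae=ea$ and $a-e\in J(T)$. *)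

(* Defs.v *)
From HB Require Import structures.
From mathcomp Require Import all_boot all_order all_algebra.
From mathcomp Require Import ring.
Set Implicit Arguments. Unset Strict Implicit. Unset Printing Implicit Defensive.
Import Order.TTheory GRing.Theory.
Local Open Scope ring_scope.

(* Jacobson radical of an (associative, unital, possibly noncommutative) ring T,
   via its standard elementwise description:
   a \in J(T)  <->  for every r, 1 - r a is a (two-sided) unit of T. *)
Definition isunit (T : pzRingType) (u : T) : Prop :=
  exists v : T, v * u = 1 /\ u * v = 1.

Definition jacobson (T : pzRingType) (a : T) : Prop :=
  forall r : T, isunit (1 - r * a).

Definition strongly_J_clean (T : pzRingType) (a : T) : Prop :=
  exists e : T, e * e = e /\ a * e = e * a /\ jacobson (a - e).

(* The ring M_2(R;s): carrier R^4, entries ((a,b),(c,d)) = [a b; c d]. *)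
Definition M2s (R : comPzRingType) (s : R) : Type := ((R * R) * (R * R))%type.

Section M2sRing.
Variables (R : comPzRingType) (s : R).

HB.instance Definition _ := GRing.Zmodule.on (M2s s).

Definition mx2 (a b c d : R) : M2s s := ((a, b), (c, d)).
Definition e11 (A : M2s s) : R := A.1.1.
Definition e12 (A : M2s s) : R := A.1.2.
Definition e21 (A : M2s s) : R := A.2.1.
Definition e22 (A : M2s s) : R := A.2.2.

Definition M2s_one : M2s s := mx2 1 0 0 1.
Definition M2s_mul (A B : M2s s) : M2s s :=
  mx2 (e11 A * e11 B + s ^+ 2 * e12 A * e21 B) (e11 A * e12 B + e12 A * e22 B)
      (e21 A * e11 B + e22 A * e21 B) (s ^+ 2 * e21 A * e12 B + e22 A * e22 B).

Lemma M2s_mulA : associative M2s_mul.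
Proof.
move=> [[a b] [c d]] [[a1 b1] [c1 d1]] [[a2 b2] [c2 d2]].
rewrite /M2s_mul /mx2 /e11 /e12 /e21 /e22 /=.
congr (_, _); congr (_, _); ring.
Qed.

Lemma M2s_mul1r : left_id M2s_one M2s_mul.
Proof.
move=> [[a b] [c d]]; rewrite /M2s_mul /M2s_one /mx2 /e11 /e12 /e21 /e22 /=.
congr (_, _); congr (_, _); ring.
Qed.

Lemma M2s_mulr1 : right_id M2s_one M2s_mul.
Proof.
move=> [[a b] [c d]]; rewrite /M2s_mul /M2s_one /mx2 /e11 /e12 /e21 /e22 /=.
congr (_, _); congr (_, _); ring.
Qed.

Lemma mx2D (a b c d a' b' c' d' : R) :
  mx2 a b c d + mx2 a' b' c' d' = mx2 (a + a') (b + b') (c + c') (d + d').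
Proof. by []. Qed.
Lemma e11D (A B : M2s s) : e11 (A + B) = e11 A + e11 B. Proof. by []. Qed.
Lemma e12D (A B : M2s s) : e12 (A + B) = e12 A + e12 B. Proof. by []. Qed.
Lemma e21D (A B : M2s s) : e21 (A + B) = e21 A + e21 B. Proof. by []. Qed.
Lemma e22D (A B : M2s s) : e22 (A + B) = e22 A + e22 B. Proof. by []. Qed.

Lemma M2s_mulDl : left_distributive M2s_mul +%R.
Proof.
move=> A B C; rewrite /M2s_mul mx2D !e11D !e12D !e21D !e22D; congr mx2; ring.
Qed.

Lemma M2s_mulDr : right_distributive M2s_mul +%R.
Proof.
move=> A B C; rewrite /M2s_mul mx2D !e11D !e12D !e21D !e22D; congr mx2; ring.
Qed.

HB.instance Definition _ := GRing.Zmodule_isPzRing.Build (M2s s)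
  M2s_mulA M2s_mul1r M2s_mulr1 M2s_mulDl M2s_mulDr.

Definition det_s (A : M2s s) : R := e11 A * e22 A - s ^+ 2 * e12 A * e21 A.
Definition tr_s (A : M2s s) : R := e11 A + e22 A.
End M2sRing.

(* Main.v *)
Require Import Defs.
From HB Require Import structures.
From mathcomp Require Import all_boot all_order all_algebra.
From mathcomp Require Import ring.

Import GRing.Theory.
Local Open Scope ring_scope.

Section Gen.
Variable T : pzRingType.

Lemma swapU (x y : T) : isunit (1 - x * y) -> isunit (1 - y * x).
Proof.
move=> [u [H1 H2]]; exists (1 + y * u * x); split.
- have E : (1 + y * u * x) * (1 - y * x) = 1 - y * x + y * (u * (1 - x * y)) * x.
    rewrite mulrDl mul1r !mulrBr !mulrBl ?mulr1 ?mul1r !mulrA.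
    by rewrite ?addrA.
  by rewrite E H1 mulr1 subrK.
- have E : (1 - y * x) * (1 + y * u * x) = 1 - y * x + y * ((1 - x * y) * u) * x.
    rewrite mulrDr mulr1 ?mulrBr ?mulrBl ?mulr1 ?mul1r !mulrA.
    by rewrite ?mulrBr ?mulrBl ?mul1r !mulrA.
  by rewrite E H2 mulr1 subrK.
Qed.

Lemma mulU (a b : T) : isunit a -> isunit b -> isunit (a * b).
Proof.
move=> [u [H1 H2]] [v [K1 K2]]; exists (v * u); split.
- by rewrite mulrA -(mulrA v) H1 mulr1 K1.
- by rewrite mulrA -(mulrA a) K2 mulr1 H2.
Qed.

Lemma jacL (a b : T) : jacobson a -> jacobson (b * a).
Proof. by move=> Ha r; rewrite mulrA. Qed.

Lemma jacR (a b : T) : jacobson a -> jacobson (a * b).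
Proof.
move=> Ha r; apply: swapU; rewrite -mulrA; apply: swapU.
exact: Ha.
Qed.

Lemma jacD (a b : T) : jacobson a -> jacobson b -> jacobson (a + b).
Proof.
move=> Ha Hb r; have [v [H1 H2]] := Ha r.
have -> : 1 - r * (a + b) = (1 - r * a) * (1 - (v * r) * b).
  by rewrite mulrBr mulr1 !mulrA H2 mul1r mulrDr opprD addrA.
by apply: mulU; [exact: Ha|exact: Hb].
Qed.

Lemma jacN (a : T) : jacobson a -> jacobson (- a).
Proof. by move=> Ha; rewrite -mulN1r; apply: jacL. Qed.

Lemma jacB (a b : T) : jacobson a -> jacobson b -> jacobson (a - b).
Proof. by move=> Ha Hb; apply: jacD => //; apply: jacN. Qed.
End Gen.
Section M.
Variables (R : comPzRingType) (s : R).
Definition scal (c : R) : M2s s := mx2 s c 0 0 c.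
Definition adj (A : M2s s) : M2s s := mx2 s (e22 A) (- e12 A) (- e21 A) (e11 A).
Lemma mulE (A B : M2s s) : A * B = M2s_mul A B. Proof. by []. Qed.
Lemma subE (A B : M2s s) : A - B = mx2 s (e11 A - e11 B) (e12 A - e12 B) (e21 A - e21 B) (e22 A - e22 B).
Proof. by case: A => [[? ?] [? ?]]; case: B => [[? ?] [? ?]]. Qed.
Lemma oneE : (1 : M2s s) = mx2 s 1 0 0 1. Proof. by []. Qed.

Ltac crush := rewrite ?mulE ?subE ?oneE /M2s_mul /scal /adj /tr_s /det_s /mx2 /e11 /e12 /e21 /e22 /=;
  congr (_, _); congr (_, _); ring.

Lemma CH (A : M2s s) : A * A = scal (tr_s A) * A - scal (det_s A).
Proof. case: A => [[a b] [c d]]; crush. Qed.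
Lemma adjR (A : M2s s) : A * adj A = scal (det_s A).
Proof. case: A => [[a b] [c d]]; crush. Qed.
Lemma adjL (A : M2s s) : adj A * A = scal (det_s A).
Proof. case: A => [[a b] [c d]]; crush. Qed.
Lemma scalC (c : R) (A : M2s s) : A * scal c = scal c * A.
Proof. case: A => [[a b] [x d]]; crush. Qed.
Lemma scalM (c d : R) : scal c * scal d = scal (c * d).
Proof. crush. Qed.
Lemma scal1 : scal 1 = 1.
Proof. by []. Qed.
Lemma det_sub (c : R) (r : M2s s) :
  det_s (1 - r * scal c) = 1 - (tr_s r - c * det_s r) * c.
Proof. case: r => [[a b] [x d]]; rewrite /det_s /tr_s ?mulE ?subE ?oneE /M2s_mul /scal /mx2 /e11 /e12 /e21 /e22 /=; ring. Qed.
End M.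
Arguments scal {R} s c.
Arguments adj {R s} A.

Lemma jac_scal (R : comPzRingType) (s : R) (c : R) :
  jacobson c -> jacobson (scal s c).
Proof.
move=> Hc r; set M := 1 - r * scal s c.
have [v [H1 H2]] := Hc (tr_s r - c * det_s r).
rewrite -det_sub -/M in H1 H2.
exists (scal s v * adj M); split.
- by rewrite -mulrA adjL scalM H1 scal1.
- by rewrite mulrA scalC -mulrA adjR scalM H1 scal1.
Qed.

Theorem proposition3p2 (R : comPzRingType) (s : R) (A : M2s s) :
  ~ jacobson A ->
  jacobson (det_s A) -> jacobson (tr_s A) ->
  ~ strongly_J_clean A.
Proof.
move=> nJA Hd Ht [e [ee [Ae Hj]]].
set j := A - e in Hj.
have AA : jacobson (A * A).
  rewrite CH; apply: jacB; last exact: jac_scal.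
  by apply: jacR; apply: jac_scal.
have eJ : jacobson e.
  have -> : e = A * A - A * j - j * A + j * j.
    rewrite /j !mulrBr !mulrBl Ae.
    rewrite ee; move: (A * A) (e * A) => x y.
    rewrite opprB addrA (addrC x) subrK -[y + (y - x) + (x - y)]addrA [(y - x) + _](_ : _ = 0) ?addr0; last by rewrite -opprB addNr.
    by rewrite opprB addrC subrK.
  apply: jacD; last by apply: jacL.
  apply: jacB; last by apply: jacR.
  by apply: jacB => //; apply: jacL.
have e0 : e = 0.
  have [u [H1 H2]] := eJ 1.
  rewrite mul1r in H1 H2.
  have : e * (1 - e) * u = 0 by rewrite mulrBr mulr1 ee subrr mul0r.
  by rewrite -mulrA H2 mulr1.
by apply: nJA; rewrite -(subr0 A) -e0.
Qed.
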